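(* Let $(X,T)$ be a minimal dendric subshift over a finite alphabet $\mathcal{A}$. Then $(X,T)$ is balanced on letters if and only if it is balanced on factors. In particular, if $(X,T)$ is balanced (on letters, equivalently on factors), then for every factor $v\in\mathcal{L}(X)$ the frequency $\mu_v$ of $v$ is an additive topological eigenvalue of $(X,T)$, and every cylinder $[v]$ is a bounded remainder set.
   Context: $\mathcal{A}$ is a finite alphabet, $T$ is the shift on $\mathcal{A}^{\mathbb{Z}}$, $T((u_n)_n)=(u_{n+1})_n$. A subshift $(X,T)$ is a closed shift-invariant subset $X\subseteq\mathcal{A}^{\mathbb Z}$; it is minimal if it has no nonempty proper closed shift-invariant subset. $\mathcal{L}(X)$ is the set of finite words occurring as factors (blocks of consecutive letters) of elements of $X$, and $\mathcal{L}_n(X)$ those of length $n$. For $w\in\mathcal{L}(X)$ let $L(w)=\{a\in\mathcal{A}: aw\in\mathcal{L}(X)\}$, $R(w)=\{b\in\mathcal{A}: wb\in\mathcal{L}(X)\}$, $E(w)=\{(a,b): awb\in\mathcal{L}(X)\}$; the extension graph $\mathcal{E}(w)$ is the bipartite undirected graph whose vertex set is the disjoint union of $L(w)$ and $R(w)$ and whose edges are the pairs in $E(w)$. A minimal subshift is dendric if $\mathcal{E}(w)$ is a tree for every $w\in\mathcal{L}(X)$ (including the empty word). For finite words $w,v$, $|w|_v$ is the number of occurrences of $v$ as a factor of $w$ and $|w|$ is the length of $w$. $(X,T)$ is balanced on $v\in\mathcal{L}(X)$ if there is a constant $C_v$ such that $||w|_v-|w'|_v|\le C_v$ for all $w,w'\in\mathcal{L}(X)$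 with $|w|=|w'|$; it is balanced on letters if balanced on every letter, and balanced on factors if balanced on every $v\in\mathcal{L}(X)$. The cylinder of $v=v_0\cdots v_{n}$ is $[v]=\{x\in X: x_0\cdots x_n=v\}$. The frequency $\mu_v$ of $v$ is the (uniform) limit of $|w|_v/|w|$ over factors $w$ as $|w|\to\infty$ (equal to $\mu([v])$ for the invariant measure). $\theta\in\mathbb{R}$ is an additive topological eigenvalue if there is a nonzero continuous $f:X\to\mathbb{C}$ with $f(Tx)=e^{2i\pi\theta}f(x)$ for all $x\in X$. The cylinder $[v]$ is a bounded remainder set if $\sup_{x\in X,\,n\ge 0}\big|\#\{0\le i<n: T^ix\in[v]\}-n\mu_v\big|<\infty$. *)

(* Defs.v *)
From Stdlib Require Import Reals ZArith.
From Coquelicot Require Import Coquelicot.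
From mathcomp Require Import all_boot.

Set Implicit Arguments.
Unset Strict Implicit.
Unset Printing Implicit Defensive.

Section Subshifts.
Variable A : finType.

Definition config := Z -> A.

Definition shift (x : config) : config := fun n => x (n + 1)%Z.

Definition agree (N : nat) (x y : config) : Prop :=
  forall i : Z, (- Z.of_nat N <= i <= Z.of_nat N)%Z -> x i = y i.

(** closedness in the product topology (A discrete) *)
Definition closed_set (X : config -> Prop) : Prop :=
  forall x, (forall N : nat, exists y, X y /\ agree N x y) -> X x.

Definition shift_invariant (X : config -> Prop) : Prop :=
  forall x, X x <-> X (shift x).

Definition subshift (X : config -> Prop) : Prop :=
  closed_set X /\ shift_invariant X.

Definition minimal_subshift (X : config -> Prop) : Prop :=
  subshift X /\ (exists x, X x) /\
  forall Y : config -> Prop,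
    (forall y, Y y -> X y) -> subshift Y -> (exists y, Y y) ->
    forall x, X x -> Y x.

Definition factor (x : config) (i : Z) (n : nat) : seq A :=
  map (fun k => x (i + Z.of_nat k)%Z) (iota 0 n).

Definition inL (X : config -> Prop) (w : seq A) : Prop :=
  exists x, X x /\ exists i : Z, factor x i (size w) = w.

Definition occ (w v : seq A) : nat :=
  count (fun i => take (size v) (drop i w) == v) (iota 0 (size w - size v).+1).

(** extension graph E(w): vertices are (false, a) for a in L(w) (left copy)
    and (true, b) for b in R(w) (right copy) *)
Definition ext_vertex (X : config -> Prop) (w : seq A) (p : bool * A) : Prop :=
  if p.1 then inL X (rcons w p.2) else inL X (p.2 :: w).

Definition ext_adj (X : config -> Prop) (w : seq A) (p q : bool * A) : Prop :=
  (p.1 = false /\ q.1 = true /\ inL X (p.2 :: rcons w q.2)) \/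
  (p.1 = true /\ q.1 = false /\ inL X (q.2 :: rcons w p.2)).

Definition walk (adj : bool * A -> bool * A -> Prop) (u : bool * A)
  (c : seq (bool * A)) (v : bool * A) : Prop :=
  (forall i, (i < size c)%N -> adj (nth u (u :: c) i) (nth u c i)) /\
  last u c = v.

Definition graph_connected (V : bool * A -> Prop)
  (adj : bool * A -> bool * A -> Prop) : Prop :=
  forall u v, V u -> V v -> exists c, walk adj u c v.

Definition graph_acyclic (V : bool * A -> Prop)
  (adj : bool * A -> bool * A -> Prop) : Prop :=
  ~ exists (d : bool * A) (c : seq (bool * A)),
      (3 <= size c)%N /\ uniq c /\ (forall p, p \in c -> V p) /\
      forall i, (i < size c)%N ->
        adj (nth d c i) (nth d c (i.+1 %% size c)).

Definition is_tree (V : bool * A -> Prop) (adj : bool * A -> bool * A -> Prop)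
  : Prop := graph_connected V adj /\ graph_acyclic V adj.

Definition dendric (X : config -> Prop) : Prop :=
  forall w, inL X w -> is_tree (ext_vertex X w) (ext_adj X w).

Definition balanced_on (X : config -> Prop) (v : seq A) : Prop :=
  exists C : nat, forall w w', inL X w -> inL X w' -> size w = size w' ->
    (occ w v <= occ w' v + C)%N /\ (occ w' v <= occ w v + C)%N.

Definition balanced_on_letters (X : config -> Prop) : Prop :=
  forall a : A, balanced_on X [:: a].

Definition balanced_on_factors (X : config -> Prop) : Prop :=
  forall v, inL X v -> balanced_on X v.

Definition is_frequency (X : config -> Prop) (v : seq A) (mu : R) : Prop :=
  forall eps : R, (0 < eps)%R -> exists N : nat, forall w, inL X w ->
    (N <= size w)%N ->
    (Rabs (INR (occ w v) / INR (size w) - mu) < eps)%R.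

Definition continuous_on_X (X : config -> Prop) (f : config -> C) : Prop :=
  forall x, X x -> forall eps : R, (0 < eps)%R -> exists N : nat,
    forall y, X y -> agree N x y -> (Cmod (Cminus (f y) (f x)) < eps)%R.

Definition e2ipi (theta : R) : C := (cos (2 * PI * theta), sin (2 * PI * theta)).

Definition additive_eigenvalue (X : config -> Prop) (theta : R) : Prop :=
  exists f : config -> C, continuous_on_X X f /\
    (exists x, X x /\ f x <> 0%C) /\
    forall x, X x -> f (shift x) = Cmult (e2ipi theta) (f x).

(** [v] is a bounded remainder set (T^i x in [v] iff x_i ... x_{i+|v|-1} = v) *)
Definition bounded_remainder (X : config -> Prop) (v : seq A) (mu : R) : Prop :=
  exists B : R, forall x, X x -> forall n : nat,
    (Rabs (INR (count (fun i => factor x (Z.of_nat i) (size v) == v) (iota 0 n))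
           - INR n * mu) <= B)%R.
End Subshifts.

(* Main.v *)
Set Warnings "-notation-overridden -ambiguous-paths".
Require Import Defs.
From Stdlib Require Import Reals ZArith Lia Lra Classical ClassicalEpsilon FunctionalExtensionality.
From Coquelicot Require Import Coquelicot.
From mathcomp Require Import all_boot.
Set Implicit Arguments.
Unset Strict Implicit.
Unset Printing Implicit Defensive.
From mathcomp Require Import zify.
Local Open Scope nat_scope.

Section Comb.
Variable A : finType.
Implicit Types (x y : config A) (u v w : seq A).

Lemma size_factor x i n : size (factor x i n) = n.
Proof. by rewrite /factor size_map size_iota. Qed.

Lemma factor_ext x y i n : (forall k, (i <= k < i + Z.of_nat n)%Z -> x k = y k) ->
  factor x i n = factor y i n.
Proof.
move=> H; rewrite /factor; apply/eq_in_map => k; rewrite mem_iota add0n => /andP[_ Hk].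
apply: H; move/ltP: Hk; lia.
Qed.

Lemma take_factor x i n k : (k <= n)%N -> take k (factor x i n) = factor x i k.
Proof.
move=> Hk; rewrite /factor -map_take; congr map.
by rewrite -{1}(subnKC Hk) iotaD take_size_cat // size_iota.
Qed.

Lemma drop_factor x i n k : drop k (factor x i n) = factor x (i + Z.of_nat k) (n - k).
Proof.
rewrite /factor -map_drop.
case: (leqP k n) => Hk.
  rewrite -{1}(subnKC Hk) iotaD drop_size_cat ?size_iota // add0n -[k in iota k _]addn0 iotaDl -map_comp.
  apply/eq_map => j /=; congr x; rewrite Nat2Z.inj_add; lia.
rewrite drop_oversize ?size_iota; last exact: ltnW.
by have -> : n - k = 0 by apply/eqP; rewrite subn_eq0 ltnW.
Qed.

Lemma factor_S x i n : factor x i n.+1 = x i :: factor x (i + 1) n.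
Proof.
rewrite /factor /= Z.add_0_r; congr cons.
rewrite -[1%N]addn0 iotaDl -map_comp; apply/eq_map => j /=; congr x; lia.
Qed.

Lemma factor_shift x i n : factor (Defs.shift x) i n = factor x (i + 1) n.
Proof. rewrite /factor /Defs.shift; apply/eq_map => j /=; f_equal; lia. Qed.

Lemma inL_factor X x i n : X x -> inL X (factor x i n).
Proof. by move=> Hx; exists x; split=> //; exists i; rewrite size_factor. Qed.

Lemma inL_take X u k : inL X u -> inL X (take k u).
Proof.
case=> x [Hx [i Hi]]; rewrite -Hi.
case: (leqP k (size u)) => Hk.
  by rewrite take_factor //; apply: inL_factor.
by rewrite take_oversize ?size_factor; [apply: inL_factor | apply: ltnW].
Qed.

Lemma inL_drop X u k : inL X u -> inL X (drop k u).
Proof. case=> x [Hx [i Hi]]; rewrite -Hi drop_factor; exact: inL_factor. Qed.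


Definition indw (v u : seq A) : Z := if u == v then 1%Z else 0%Z.

Fixpoint SB (m : nat) (G : seq A -> Z) (x : config A) (i : Z) (n : nat) : Z :=
  match n with 0 => 0%Z | n'.+1 => (SB m G x i n' + G (factor x (i + Z.of_nat n') m))%Z end.

Lemma SB_add m G x i n k :
  SB m G x i (n + k) = (SB m G x i n + SB m G x (i + Z.of_nat n) k)%Z.
Proof.
elim: k => [|k IH] /=; first by rewrite addn0; lia.
rewrite addnS /= IH.
have -> : (i + Z.of_nat (n + k) = i + Z.of_nat n + Z.of_nat k)%Z by lia.
lia.
Qed.

Lemma count_SB m v x i (P : pred nat) n :
  (forall k, k < n -> P k = (factor x (i + Z.of_nat k) m == v)) ->
  Z.of_nat (count P (iota 0 n)) = SB m (indw v) x i n.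
Proof.
elim: n => [|n IH] H //.
rewrite -[n.+1]addn1 iotaD count_cat add0n SB_add /= addn0 Nat2Z.inj_add IH; last first.
  by move=> k Hk; apply: H; apply: (ltn_trans Hk).
rewrite H // /indw Z.add_0_r; case: (_ == v) => /=; lia.
Qed.

Lemma occ_SB v x i N : size v <= N ->
  Z.of_nat (occ (factor x i N) v) = SB (size v) (indw v) x i (N - size v).+1.
Proof.
move=> HN; rewrite /occ size_factor; apply: count_SB => k Hk.
rewrite drop_factor take_factor //; lia.
Qed.

Lemma occ_big v x i N : N < size v -> occ (factor x i N) v = 0.
Proof.
move=> HN; rewrite /occ size_factor.
have -> : N - size v = 0 by lia.
rewrite /= drop0 take_oversize ?size_factor; last exact: ltnW.
by case: eqP => // E; move: HN; rewrite -E size_factor ltnn.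
Qed.

Definition Bal (X : config A -> Prop) m G := exists C : Z, forall x y i j n, X x -> X y ->
  (Z.abs (SB m G x i n - SB m G y j n) <= C)%Z.

Lemma SB_ext X m G1 G2 x i n : X x ->
  (forall u, inL X u -> size u = m -> G1 u = G2 u) -> SB m G1 x i n = SB m G2 x i n.
Proof.
move=> Hx H; elim: n => [|n IH] //=; rewrite IH H //.
  exact: inL_factor.
exact: size_factor.
Qed.

Lemma Bal_ext X m G1 G2 :
  (forall u, inL X u -> size u = m -> G1 u = G2 u) -> Bal X m G1 -> Bal X m G2.
Proof.
move=> H [C HC]; exists C => x y i j n Hx Hy.
rewrite -(@SB_ext X m G1 G2 x i n Hx H) -(@SB_ext X m G1 G2 y j n Hy H); exact: HC.
Qed.

Lemma SB_plus m G1 G2 x i n :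
  SB m (fun u => G1 u + G2 u)%Z x i n = (SB m G1 x i n + SB m G2 x i n)%Z.
Proof. elim: n => [|n IH]; first by rewrite /=; lia. rewrite /= IH; lia. Qed.

Lemma SB_scale m k G x i n :
  SB m (fun u => k * G u)%Z x i n = (k * SB m G x i n)%Z.
Proof. elim: n => [|n IH]; first by rewrite /=; lia. rewrite /= IH; lia. Qed.

Lemma Bal_plus X m G1 G2 : Bal X m G1 -> Bal X m G2 -> Bal X m (fun u => G1 u + G2 u)%Z.
Proof.
move=> [C1 H1] [C2 H2]; exists (C1 + C2)%Z => x y i j n Hx Hy.
rewrite !SB_plus; have := H1 x y i j n Hx Hy; have := H2 x y i j n Hx Hy; lia.
Qed.

Lemma Bal_scale X m k G : Bal X m G -> Bal X m (fun u => k * G u)%Z.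
Proof.
move=> [C H]; exists (Z.abs k * C)%Z => x y i j n Hx Hy.
rewrite !SB_scale -Z.mul_sub_distr_l Z.abs_mul.
apply: Z.mul_le_mono_nonneg_l; [lia | exact: H].
Qed.

Lemma Bal_zero X m : Bal X m (fun _ => 0%Z).
Proof.
exists 0%Z => x y i j n _ _.
have E : forall z k, SB m (fun _ => 0%Z) z k n = 0%Z.
  by move=> z k; elim: n => [|n IH] //=; rewrite IH.
by rewrite !E.
Qed.

Lemma Bal_sum X m (I : Type) (l : seq I) (F : I -> seq A -> Z) :
  (forall t, Bal X m (F t)) -> Bal X m (fun u => foldr (fun t acc => F t u + acc) 0 l)%Z.
Proof.
move=> H; elim: l => [|t l IH] /=; first exact: Bal_zero.
exact: Bal_plus.
Qed.

Lemma Bal_take X m G : Bal X m G -> Bal X m.+1 (fun u => G (take m u)).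
Proof.
move=> [C H]; exists C => x y i j n Hx Hy.
have E : forall z k, SB m.+1 (fun u => G (take m u)) z k n = SB m G z k n.
  by move=> z k; elim: n => [|n IH] //=; rewrite IH take_factor.
by rewrite !E; apply: H.
Qed.

Lemma Bal_behead X m G : Bal X m G -> Bal X m.+1 (fun u => G (behead u)).
Proof.
move=> [C H]; exists C => x y i j n Hx Hy.
have E : forall z k, SB m.+1 (fun u => G (behead u)) z k n = SB m G z (k + 1) n.
  move=> z k; elim: n => [|n IH] //.
  have -> : SB m.+1 (fun u => G (behead u)) z k n.+1 = (SB m.+1 (fun u => G (behead u)) z k n + G (behead (factor z (k + Z.of_nat n) m.+1)))%Z by [].
  have -> : SB m G z (k + 1) n.+1 = (SB m G z (k + 1) n + G (factor z (k + 1 + Z.of_nat n) m))%Z by [].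
  rewrite IH factor_S /=.
  by have -> : (k + Z.of_nat n + 1 = k + 1 + Z.of_nat n)%Z by lia.
by rewrite !E; apply: H.
Qed.

Lemma Bal_const X G : Bal X 0 G.
Proof.
exists 0%Z => x y i j n _ _.
have E : forall z k, SB 0 G z k n = (Z.of_nat n * G [::])%Z.
  move=> z k; elim: n => [|n IH]; first by rewrite /=; lia.
  have -> : SB 0 G z k n.+1 = (SB 0 G z k n + G (factor z (k + Z.of_nat n) 0))%Z by [].
  rewrite IH (_ : factor z _ 0 = [::]) // Nat2Z.inj_succ; lia.
rewrite !E; lia.
Qed.

End Comb.

Section Graph.
Variable T : eqType.
Implicit Types (R : T -> T -> Prop).

Fixpoint pathw R (u : T) (c : seq T) (v : T) : Prop :=
  match c with [::] => u = v | x :: c' => R u x /\ pathw R x c' v end.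

Definition NoCycle R : Prop :=
  ~ exists (d : T) (c : seq T), 3 <= size c /\ uniq c /\
      (forall p, p \in c -> exists q, R p q) /\
      forall i, i < size c -> R (nth d c i) (nth d c (i.+1 %% size c)).

Lemma NoCycle_sub R R' : (forall p q, R p q -> R' p q) -> NoCycle R' -> NoCycle R.
Proof.
move=> H N [d [c [H1 [H2 [H3 H4]]]]]; apply: N; exists d, c; split=> //; split=> //; split.
  by move=> p /H3 [q Hq]; exists q; apply: H.
by move=> i /H4; apply: H.
Qed.

Lemma pathw_drop R y l v : pathw R y l v ->
  forall i p rest, drop i (y :: l) = p :: rest -> pathw R p rest v.
Proof.
elim: l y => [|z l IH] y Hp [|i] p rest.
- by case=> <- <-.
- by case: i.
- by case=> <- <-.
- case: Hp => _ Hp /=; exact: IH.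
Qed.

Lemma pathw_uniq R u c v : pathw R u c v -> exists c', pathw R u c' v /\ uniq (u :: c').
Proof.
elim: c u => [|x c IH] u /=; first by move=> ->; exists [::].
case=> Hux /IH [c1 [Hc1 Uc1]].
case Hin: (u \in x :: c1).
  exists (drop (index u (x :: c1)).+1 (x :: c1)); split.
    apply: (pathw_drop Hc1 (i := index u (x :: c1))).
    by rewrite (drop_nth u); [rewrite nth_index | rewrite index_mem].
  have := drop_uniq (index u (x :: c1)) Uc1.
  by rewrite (drop_nth u) ?index_mem // nth_index.
exists (x :: c1); split=> //.
by rewrite cons_uniq Hin.
Qed.

Lemma pathw_nth R u c v : pathw R u c v ->
  forall d i, i < size c -> R (nth d (u :: c) i) (nth d c i).
Proof.
elim: c u => [|x c IH] u //= [Hux Hp] d [|i] //= Hi.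
exact: IH.
Qed.

Lemma pathw_sub R R' u c v : (forall p q, R p q -> R' p q) -> pathw R u c v -> pathw R' u c v.
Proof. by move=> H; elim: c u => [|x c IH] u //= [/H ? /IH]. Qed.

Lemma pathw_rcons R u c v w : pathw R u c v -> R v w -> pathw R u (rcons c w) w.
Proof.
elim: c u => [|x c IH] u /=; first by move=> ->.
by case=> H1 H2 H3; split=> //; apply: IH.
Qed.

Lemma pathw_last R u c v : pathw R u c v -> last u c = v.
Proof. by elim: c u => [|x c IH] u /= => [|[_ /IH]]. Qed.

Lemma pathw_cycle R u c v : pathw R u c v -> uniq (u :: c) -> 2 <= size c -> R v u ->
  ~ NoCycle R.
Proof.
move=> Hp U Hs Hvu N; apply: N; exists u, (u :: c).
have Hadj : forall i, i < size (u :: c) ->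
    R (nth u (u :: c) i) (nth u (u :: c) (i.+1 %% size (u :: c))).
  move=> i Hi /=.
  case: (ltnP i (size c)) => Hic.
    rewrite modn_small; last by rewrite ltnS.
    exact: pathw_nth Hp u i Hic.
  have Ei : i = size c by apply/eqP; rewrite eqn_leq Hic andbT -ltnS.
  rewrite Ei modnn /=.
  have -> : nth u (u :: c) (size c) = last u c.
    exact: (nth_last u (u :: c)).
  by rewrite (pathw_last Hp).
split; first by rewrite /= ltnS.
split=> //; split=> // p Hpin.
exists (nth u (u :: c) ((index p (u :: c)).+1 %% size (u :: c))).
have := Hadj (index p (u :: c)); rewrite nth_index //; apply.
by rewrite index_mem.
Qed.

End Graph.

Section Pot.
Variable A : finType.

Definition adjE (Es : seq (A * A)) (p q : bool * A) : Prop :=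
  (p.1 = false /\ q.1 = true /\ (p.2, q.2) \in Es) \/
  (p.1 = true /\ q.1 = false /\ (q.2, p.2) \in Es).

Definition dec (P : Prop) : bool := if excluded_middle_informative P then true else false.

Lemma decP (P : Prop) : dec P = true <-> P.
Proof. by rewrite /dec; case: excluded_middle_informative. Qed.

Lemma pathw_adj_sym Es p q : adjE Es p q -> adjE Es q p.
Proof. by case=> [[? [? ?]]|[? [? ?]]]; [right|left]. Qed.

Lemma pot (Es : seq (A * A)) : NoCycle (adjE Es) ->
  forall c : A -> A -> Z, exists f g : A -> Z,
    forall a b, (a, b) \in Es -> c a b = (f a + g b)%Z.
Proof.
elim: Es => [|[a0 b0] Es IH] N c.
  by exists (fun _ => 0%Z), (fun _ => 0%Z).
have N' : NoCycle (adjE Es).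
  apply: NoCycle_sub N => p q [[? [? H]]|[? [? H]]]; [left|right];
    by do 2 (split=> //); rewrite in_cons H orbT.
have [f' [g' Hfg]] := IH N' c.
case Hin: ((a0, b0) \in Es).
  exists f', g' => a b; rewrite in_cons => /orP [/eqP [-> ->]|]; last exact: Hfg.
  exact: Hfg.
pose r := ((true, b0) : bool * A).
pose reach q := exists l, pathw (adjE Es) r l q.
pose d := (c a0 b0 - f' a0 - g' b0)%Z.
exists (fun a => f' a - (if dec (reach (false, a)) then d else 0))%Z.
exists (fun b => g' b + (if dec (reach (true, b)) then d else 0))%Z.
have Hr0 : dec (reach (true, b0)) = true by apply/decP; exists [::].
have Hr1 : dec (reach (false, a0)) = false.
  case E: dec => //; move/decP: E => [l Hl].
  have [l' [Hl' U]] := pathw_uniq Hl.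
  have Hsub : forall p q, adjE Es p q -> adjE ((a0, b0) :: Es) p q.
    by move=> p q [[? [? H]]|[? [? H]]]; [left|right];
      do 2 (split=> //); rewrite in_cons H orbT.
  exfalso; apply: (pathw_cycle (pathw_sub Hsub Hl') U _ _ N).
  - case: l' Hl' U {Hl} => [|p1 [|p2 l']] //=.
      move=> [Hadj E] _; rewrite E in Hadj.
      case: Hadj => [[//]|[_ [_ H]]].
      by rewrite H in Hin.
  - by left; do 2 (split=> //); rewrite in_cons eqxx.
move=> a b; rewrite in_cons => /orP [/eqP [-> ->]|Hab].
  rewrite Hr0 Hr1 /d; lia.
have Ee : dec (reach (false, a)) = dec (reach (true, b)).
  have Hadj : adjE Es (false, a) (true, b) by left.
  apply/idP/idP => /decP [l Hl]; apply/decP.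
    by exists (rcons l (true, b)); apply: pathw_rcons Hl Hadj.
  by exists (rcons l (false, a)); apply: pathw_rcons Hl (pathw_adj_sym Hadj).
rewrite Ee (Hfg a b Hab); case: dec; lia.
Qed.

End Pot.

Section Main.
Variable A : finType.
Variable X : config A -> Prop.
Hypothesis HD : dendric X.

Lemma inL_ext_l a w b : inL X (a :: rcons w b) -> inL X (a :: w).
Proof.
move=> H; have := inL_take (size w).+1 H.
by rewrite /= -cats1 take_size_cat.
Qed.

Lemma inL_ext_r a w b : inL X (a :: rcons w b) -> inL X (rcons w b).
Proof. by move=> H; have := inL_drop 1 H; rewrite /= drop0. Qed.

Lemma inL_ext_m a w b : inL X (a :: rcons w b) -> inL X w.
Proof.
move=> /inL_ext_r H; have := inL_take (size w) H.
by rewrite -cats1 take_size_cat.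
Qed.

Lemma local_pot (G : seq A -> Z) w : exists fg : (A -> Z) * (A -> Z),
  forall a b, inL X (a :: rcons w b) -> G (a :: rcons w b) = (fg.1 a + fg.2 b)%Z.
Proof.
case: (classic (inL X w)) => Hw; last first.
  by exists (fun _ => 0%Z, fun _ => 0%Z) => a b /inL_ext_m.
pose Es := [seq ab <- [seq (a, b) | a <- enum A, b <- enum A] |
             dec (inL X (ab.1 :: rcons w ab.2))].
have HEs : forall a b, (a, b) \in Es <-> inL X (a :: rcons w b).
  move=> a b; rewrite mem_filter /=; split.
    by case/andP => /decP.
  move=> H; apply/andP; split; first by apply/decP.
  by apply: allpairs_f; rewrite mem_enum.
have N : NoCycle (adjE Es).
  case: (HD Hw) => _ Hac [d [c [H1 [H2 [H3 H4]]]]]; apply: Hac.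
  have Hadj : forall p q, adjE Es p q -> ext_adj X w p q.
    move=> p q [[? [? H]]|[? [? H]]]; [left|right]; do 2 (split=> //); exact/HEs.
  exists d, c; split=> //; split=> //; split.
    move=> p /H3 [q [[Hp [_ H]]|[Hp [_ H]]]]; rewrite /ext_vertex Hp.
      exact: inL_ext_l (proj1 (HEs _ _) H).
    exact: inL_ext_r (proj1 (HEs _ _) H).
  by move=> i /H4 /Hadj.
have [f [g Hfg]] := pot N (fun a b => G (a :: rcons w b)).
by exists (f, g) => a b /HEs /Hfg.
Qed.

Lemma sum_enum (G : seq A -> Z) b (l : seq A) : uniq l ->
  foldr (fun t acc => (G [:: t] * indw [:: t] [:: b]) + acc)%Z 0%Z l =
  if b \in l then G [:: b] else 0%Z.
Proof.
elim: l => [|t l IH] //= /andP [Ht U]; rewrite IH // in_cons /indw.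
case: (eqVneq b t) => [->|Hbt] /=.
  by rewrite eqxx (negbTE Ht); lia.
have -> : ([:: b] == [:: t]) = false by apply/eqP => -[E]; rewrite E eqxx in Hbt.
lia.
Qed.

Hypothesis HL : balanced_on_letters X.

Lemma Bal_letter a : Bal X 1 (indw [:: a]).
Proof.
have [C HC] := HL a; exists (Z.of_nat C) => x y i j n Hx Hy.
case: n => [|n]; first by rewrite /=; lia.
have Ex : Z.of_nat (occ (factor x i n.+1) [:: a]) = SB 1 (indw [:: a]) x i n.+1.
  by rewrite (@occ_SB A [:: a] x i n.+1 isT) /= subn1.
have Ey : Z.of_nat (occ (factor y j n.+1) [:: a]) = SB 1 (indw [:: a]) y j n.+1.
  by rewrite (@occ_SB A [:: a] y j n.+1 isT) /= subn1.
rewrite -Ex -Ey.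
have [] := HC _ _ (inL_factor i n.+1 Hx) (inL_factor j n.+1 Hy).
  by rewrite !size_factor.
lia.
Qed.

Lemma Bal_one G : Bal X 1 G.
Proof.
apply: (Bal_ext (m := 1) (G1 := fun u => foldr (fun t acc => (G [:: t] * indw [:: t] u) + acc)%Z 0%Z (enum A))).
  move=> u _; case: u => [|b [|]] //= _.
  by rewrite (sum_enum G b (enum_uniq A)) mem_enum.
apply: Bal_sum => t; apply: Bal_scale; exact: Bal_letter.
Qed.

Lemma Bal_all (a0 : A) m G : Bal X m.+1 G.
Proof.
elim: m G => [|m IH] G; first exact: Bal_one.
have Hch := fun w => constructive_indefinite_description _ (local_pot G w).
pose F w := proj1_sig (Hch w).
have HF : forall w a b, inL X (a :: rcons w b) -> G (a :: rcons w b) = ((F w).1 a + (F w).2 b)%Z.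
  move=> w; exact: (proj2_sig (Hch w)).
pose G1 u := (F (behead u)).1 (head a0 u).
pose G2 u := (F (take m u)).2 (nth a0 u m).
apply: (Bal_ext (m := m.+2) (G1 := fun u => G1 (take m.+1 u) + G2 (behead u))%Z).
  move=> [|a u] Hu //= [Hs].
  case/lastP: u Hu Hs => [|w b] Hu; first by [].
  rewrite size_rcons => -[Hs].
  rewrite (HF w a b Hu) /G1 /G2 /=.
  by rewrite -cats1 take_size_cat // nth_cat Hs ltnn subnn /=.
apply: Bal_plus; first exact: Bal_take.
exact: Bal_behead.
Qed.

End Main.

Lemma Bal_balanced (A : finType) (X : config A -> Prop) v :
  Bal X (size v) (indw v) -> balanced_on X v.
Proof.
move=> [C HC]; exists (Z.to_nat C) => w w' [x [Hx [i Hi]]] [y [Hy [j Hj]]] Hs.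
rewrite -Hi -Hj -Hs.
case: (leqP (size v) (size w)) => Hv.
  have := HC x y i j (size w - size v).+1 Hx Hy.
  rewrite -(occ_SB x i Hv) -(occ_SB y j Hv); lia.
by rewrite !occ_big.
Qed.

Local Open Scope R_scope.

Lemma abs_le_inv x c : Rabs x <= c -> - c <= x <= c.
Proof. unfold Rabs; destruct Rcase_abs; lra. Qed.

Lemma sup_exists (a : nat -> R) (C : R) : a 0%N = 0 ->
  (forall n k, Rabs (a (n + k)%N - a n - a k) <= C) ->
  exists mu, forall n, Rabs (a n - INR n * mu) <= C.
Proof.
move=> H0 H.
have C0 : 0 <= C by have := H 0%N 0%N; rewrite addn0 H0 Rminus_0_r Rminus_0_r Rabs_R0.
have Hmul : forall n k, INR k * a n - INR k * C <= a (k * n)%N <= INR k * a n + INR k * C.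
  move=> n; elim=> [|k IH]; first by rewrite mul0n H0 /=; lra.
  have := abs_le_inv (H (k * n)%N n); rewrite mulSn addnC S_INR; lra.
have Hcmp : forall n k, (1 <= n)%N -> (1 <= k)%N -> (a n - C) / INR n <= (a k + C) / INR k.
  move=> n k Hn Hk.
  have Pn : 0 < INR n by apply: lt_0_INR; apply/ltP.
  have Pk : 0 < INR k by apply: lt_0_INR; apply/ltP.
  have [H1 _] := Hmul n k; have [_ H2] := Hmul k n; rewrite mulnC in H2.
  apply: (Rmult_le_reg_r (INR n * INR k)); first exact: Rmult_lt_0_compat.
  replace ((a n - C) / INR n * (INR n * INR k)) with ((a n - C) * INR k) by (field; lra).
  replace ((a k + C) / INR k * (INR n * INR k)) with ((a k + C) * INR n) by (field; lra).
  lra.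
pose E r := exists n, (1 <= n)%N /\ r = (a n - C) / INR n.
have HB : bound E.
  by exists ((a 1%N + C) / INR 1) => r [n [Hn ->]]; apply: Hcmp.
have HE : exists r, E r by exists ((a 1%N - C) / INR 1), 1%N.
case: (@completeness E HB HE) => mu [Hub Hl].
exists mu => n.
case: n => [|n]; first by rewrite H0 /= Rmult_0_l Rminus_0_r Rabs_R0.
have Pn : 0 < INR n.+1 by apply: lt_0_INR; lia.
have L1 : (a n.+1 - C) / INR n.+1 <= mu by apply: Hub; exists n.+1.
have L2 : mu <= (a n.+1 + C) / INR n.+1.
  by apply: Hl => r [k [Hk ->]]; apply: Hcmp.
apply: Rabs_le; split.
  have : mu * INR n.+1 <= (a n.+1 + C) / INR n.+1 * INR n.+1 by apply: Rmult_le_compat_r; lra.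
  replace ((a n.+1 + C) / INR n.+1 * INR n.+1) with (a n.+1 + C) by (field; lra); lra.
have : (a n.+1 - C) / INR n.+1 * INR n.+1 <= mu * INR n.+1 by apply: Rmult_le_compat_r; lra.
replace ((a n.+1 - C) / INR n.+1 * INR n.+1) with (a n.+1 - C) by (field; lra); lra.
Qed.

Definition is_sup (h : Z -> R) L :=
  (forall n, h n <= L) /\ (forall e, 0 < e -> exists n, L - e < h n).

Definition LubE (h : Z -> R) K r := r = - Rabs K \/ exists n, r = h n /\ Rabs r <= Rabs K.

Lemma LubE_bound h K : bound (LubE h K).
Proof.
exists (Rabs K) => r [->|[n [-> Hn]]]; last by have := abs_le_inv Hn; lra.
have := Rabs_pos K; lra.
Qed.

Lemma LubE_ne h K : exists r, LubE h K r.
Proof. by exists (- Rabs K); left. Qed.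

Definition Lub h K := proj1_sig (@completeness (LubE h K) (LubE_bound h K) (LubE_ne h K)).

Lemma Lub_sup h K : (forall n, Rabs (h n) <= K) -> is_sup h (Lub h K).
Proof.
move=> HK; rewrite /Lub; case: completeness => L [Hub Hl] /=.
have HK' : forall n, Rabs (h n) <= Rabs K.
  by move=> n; apply: Rle_trans (HK n) (Rle_abs K).
split.
  by move=> n; apply: Hub; right; exists n.
move=> e He; apply: NNPP => Hne.
have : L <= L - e; last lra.
apply: Hl => r [->|[n [-> _]]].
  have := abs_le_inv (HK' 0%Z).
  have : ~ (L - e < h 0%Z) by move=> Hc; apply: Hne; exists 0%Z.
  lra.
have : ~ (L - e < h n) by move=> Hc; apply: Hne; exists n.
lra.
Qed.

Lemma is_sup_unique h L1 L2 : is_sup h L1 -> is_sup h L2 -> L1 = L2.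
Proof.
move=> [U1 A1] [U2 A2].
case: (Rtotal_order L1 L2) => [H|[//|H]].
  have [n Hn] := A2 (L2 - L1) ltac:(lra); have := U1 n; lra.
have [n Hn] := A1 (L1 - L2) ltac:(lra); have := U2 n; lra.
Qed.

Lemma is_sup_shift h L c : is_sup h L -> is_sup (fun n => h (n + 1)%Z - c) (L - c).
Proof.
move=> [U Ap]; split.
  by move=> n; have := U (n + 1)%Z; lra.
move=> e He; have [n Hn] := Ap e He; exists (n - 1)%Z.
by rewrite Z.sub_add; lra.
Qed.

Lemma abs_sin_le t : Rabs (sin t) <= Rabs t.
Proof.
have Hpos : forall u, 0 <= u -> Rabs (sin u) <= u.
  move=> u Hu; case: (Req_dec u 0) => [->|Hu0]; first by rewrite sin_0 Rabs_R0; lra.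
  have Hlt := sin_lt_x u ltac:(lra).
  apply: Rabs_le; split; last lra.
  case: (Rle_lt_dec 1 u) => H1.
    have := SIN_bound u; lra.
  have : 0 <= sin u by apply: sin_ge_0; have := PI2_1; lra.
  lra.
case: (Rle_lt_dec 0 t) => Ht.
  by rewrite (Rabs_right t) ?Rge_le; [apply: Hpos | lra].
rewrite -(Ropp_involutive t) sin_neg Rabs_Ropp Rabs_Ropp.
rewrite (Rabs_right (- t)); last lra.
apply: Hpos; lra.
Qed.

Lemma one_minus_cos u : 1 - cos u <= u ^ 2 / 2.
Proof.
have E : cos u = 1 - 2 * sin (u / 2) ^ 2.
  have -> : u = 2 * (u / 2) by field.
  rewrite cos_2a_sin /=; have -> : 2 * (u / 2) / 2 = u / 2 by field.
  ring.
rewrite E.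
have H := abs_sin_le (u / 2).
have : sin (u / 2) ^ 2 <= (u / 2) ^ 2.
  rewrite -(pow2_abs (sin _)) -(pow2_abs (u / 2)).
  apply: pow_incr; split; [exact: Rabs_pos | exact: H].
lra.
Qed.

Lemma e2ipi_plus a b : e2ipi (a + b) = Cmult (e2ipi a) (e2ipi b).
Proof.
rewrite /e2ipi /Cmult /=.
have -> : 2 * PI * (a + b) = 2 * PI * a + 2 * PI * b by ring.
by rewrite cos_plus sin_plus; f_equal; ring.
Qed.

Lemma e2ipi_m1 t : e2ipi (t - 1) = e2ipi t.
Proof.
rewrite /e2ipi.
have -> : 2 * PI * t = 2 * PI * (t - 1) + 2 * INR 1 * PI by rewrite /=; ring.
by rewrite cos_period sin_period.
Qed.

Lemma e2ipi_neq0 t : e2ipi t <> 0%C.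
Proof.
rewrite /e2ipi => -[Hc Hs].
have := sin2_cos2 (2 * PI * t); rewrite Hc Hs /Rsqr; lra.
Qed.

Lemma e2ipi_lip s t : Cmod (Cminus (e2ipi s) (e2ipi t)) <= 2 * PI * Rabs (s - t).
Proof.
rewrite /Cmod /Cminus /e2ipi /Cplus /Copp /=.
set A := 2 * PI * s; set B := 2 * PI * t.
have -> : 2 * PI * Rabs (s - t) = Rabs (A - B).
  rewrite /A /B -Rmult_minus_distr_l Rabs_mult (Rabs_right (2 * PI)) //.
  have := PI_RGT_0; lra.
rewrite -sqrt_Rsqr_abs; apply: sqrt_le_1_alt.
have E : (cos A + - cos B) ^ 2 + (sin A + - sin B) ^ 2 = 2 - 2 * cos (A - B).
  rewrite cos_minus.
  have := sin2_cos2 A; have := sin2_cos2 B; rewrite /Rsqr => HA HB.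
  nra.
rewrite E; have := one_minus_cos (A - B); rewrite /Rsqr; lra.
Qed.

Lemma Bal_mu (A : finType) (X : config A -> Prop) m G x0 : Bal X m G -> X x0 ->
  exists mu K, 0 <= K /\ forall x i n, X x ->
    Rabs (IZR (SB m G x i n) - INR n * mu) <= K.
Proof.
move=> [C HC] Hx0.
pose a n := IZR (SB m G x0 0 n).
have Ha : forall n k, Rabs (a (n + k)%N - a n - a k) <= IZR C.
  move=> n k; rewrite /a SB_add -!minus_IZR Rabs_Zabs; apply: IZR_le.
  have := HC x0 x0 (0 + Z.of_nat n)%Z 0%Z k Hx0 Hx0; lia.
have [mu Hmu] := sup_exists (a := a) (C := IZR C) erefl Ha.
exists mu, (2 * IZR C); split.
  have := Ha 0%N 0%N; have := Rabs_pos (a (0 + 0)%N - a 0%N - a 0%N); lra.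
move=> x i n Hx.
have H1 : Rabs (IZR (SB m G x i n) - a n) <= IZR C.
  by rewrite /a -minus_IZR Rabs_Zabs; apply: IZR_le; apply: HC.
have := Hmu n; have := abs_le_inv H1 => H1' /abs_le_inv H2.
apply: Rabs_le; lra.
Qed.

Lemma SB_shift (A : finType) m G (x : config A) i n :
  SB m G (Defs.shift x) i n = SB m G x (i + 1) n.
Proof.
elim: n => [|n IH] //=; rewrite IH factor_shift.
by have -> : (i + Z.of_nat n + 1 = i + 1 + Z.of_nat n)%Z by lia.
Qed.

Lemma SB_local (A : finType) m G (x y : config A) i n :
  (forall k, (i <= k < i + Z.of_nat n + Z.of_nat m)%Z -> x k = y k) ->
  SB m G x i n = SB m G y i n.
Proof.
elim: n => [|n IH] H //=.
rewrite IH; last by move=> k Hk; apply: H; lia.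
rewrite (@factor_ext A x y); first by [].
move=> k Hk; apply: H; lia.
Qed.

Lemma agree_mono (A : finType) N N' (x y : config A) : (N' <= N)%N -> agree N x y -> agree N' x y.
Proof. by move=> HN H k Hk; apply: H; lia. Qed.

Section Eigen.
Variable A : finType.
Variable X : config A -> Prop.
Hypothesis HXm : minimal_subshift X.
Variable v : seq A.
Variables mu K : R.
Hypothesis HK : forall x i n, X x -> Rabs (IZR (SB (size v) (indw v) x i n) - INR n * mu) <= K.

Let m := size v.
Definition Sg (x : config A) a b :=
  IZR (SB m (indw v) x a (Z.to_nat (b - a))) - IZR (b - a) * mu.
Definition Sg' x a b := if (a <=? b)%Z then Sg x a b else - Sg x b a.

Lemma Sg_refl x a : Sg x a a = 0.
Proof. by rewrite /Sg Z.sub_diag /=; ring. Qed.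

Lemma Sg_chasles x a b c : (a <= b)%Z -> (b <= c)%Z -> Sg x a c = Sg x a b + Sg x b c.
Proof.
move=> Hab Hbc; rewrite /Sg.
have -> : Z.to_nat (c - a) = (Z.to_nat (b - a) + Z.to_nat (c - b))%N by lia.
rewrite SB_add plus_IZR.
have -> : (a + Z.of_nat (Z.to_nat (b - a)) = b)%Z by lia.
have -> : (c - a = (b - a) + (c - b))%Z by ring.
rewrite plus_IZR; ring.
Qed.

Lemma Sg'_chasles x a b c : Sg' x a c = Sg' x a b + Sg' x b c.
Proof.
rewrite /Sg'.
case: (Z.leb_spec a c); case: (Z.leb_spec a b); case: (Z.leb_spec b c) => H1 H2 H3.
all: try (have := @Sg_chasles x a b c ltac:(lia) ltac:(lia)).
all: try (have := @Sg_chasles x a c b ltac:(lia) ltac:(lia)).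
all: try (have := @Sg_chasles x b a c ltac:(lia) ltac:(lia)).
all: try (have := @Sg_chasles x b c a ltac:(lia) ltac:(lia)).
all: try (have := @Sg_chasles x c a b ltac:(lia) ltac:(lia)).
all: try (have := @Sg_chasles x c b a ltac:(lia) ltac:(lia)).
all: try lia.
all: rewrite ?Sg_refl; lra.
Qed.

Lemma Sg_bound x a b : X x -> (a <= b)%Z -> Rabs (Sg x a b) <= K.
Proof.
move=> Hx Hab; have := HK a (Z.to_nat (b - a)) Hx.
by rewrite /Sg INR_IZR_INZ Z2Nat.id; last lia.
Qed.

Lemma Sg'_bound x a b : X x -> Rabs (Sg' x a b) <= K.
Proof.
move=> Hx; rewrite /Sg'; case: (Z.leb_spec a b) => H.
  exact: Sg_bound.
rewrite Rabs_Ropp; apply: Sg_bound => //; lia.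
Qed.

Lemma Sg_shift x a b : Sg (Defs.shift x) a b = Sg x (a + 1) (b + 1).
Proof.
rewrite /Sg SB_shift.
by have -> : (b + 1 - (a + 1) = b - a)%Z by ring.
Qed.

Lemma Sg'_shift x a b : Sg' (Defs.shift x) a b = Sg' x (a + 1) (b + 1).
Proof.
rewrite /Sg' !Sg_shift.
by case: (Z.leb_spec a b); case: (Z.leb_spec (a + 1) (b + 1)) => H1 H2 //; lia.
Qed.

Definition Hc x n := Sg' x 0 n.

Lemma Hc_shift x n : Hc (Defs.shift x) n = Hc x (n + 1) - Hc x 1.
Proof. rewrite /Hc Sg'_shift Z.add_0_l; have := Sg'_chasles x 0 1 (n + 1); lra. Qed.

Lemma Hc_bound x n : X x -> Rabs (Hc x n) <= K.
Proof. exact: Sg'_bound. Qed.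

Lemma Hc_local x y N n : agree N x y -> (Z.abs n + Z.of_nat m <= Z.of_nat N)%Z -> Hc x n = Hc y n.
Proof.
move=> Hag Hn; rewrite /Hc /Sg' /Sg.
case: (Z.leb_spec 0 n) => H.
  rewrite (@SB_local A m _ x y); first by [].
  move=> k Hk; apply: Hag; lia.
rewrite (@SB_local A m _ x y); first by [].
move=> k Hk; apply: Hag; lia.
Qed.

Lemma Hc_1 x : Hc x 1 = IZR (indw v (factor x 0 m)) - mu.
Proof. rewrite /Hc /Sg' /Sg /=; ring. Qed.

Definition Mx x := Lub (Hc x) K.
Definition mx x := - Lub (fun n => - Hc x n) K.

Lemma Mx_sup x : X x -> is_sup (Hc x) (Mx x).
Proof. by move=> Hx; apply: Lub_sup => n; apply: Hc_bound. Qed.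

Lemma mx_sup x : X x -> is_sup (fun n => - Hc x n) (- mx x).
Proof.
move=> Hx; rewrite /mx Ropp_involutive; apply: Lub_sup => n.
by rewrite Rabs_Ropp; apply: Hc_bound.
Qed.

Lemma is_sup_ext (h1 h2 : Z -> R) L : (forall n, h1 n = h2 n) -> is_sup h1 L -> is_sup h2 L.
Proof.
move=> E [U Ap]; split; first by move=> n; rewrite -E.
by move=> e He; have [n Hn] := Ap e He; exists n; rewrite -E.
Qed.

Lemma shiftX x : X x -> X (Defs.shift x).
Proof. by case: HXm => [[_ Hinv] _] Hx; apply (proj1 (Hinv x)). Qed.

Lemma Mx_shift x : X x -> Mx (Defs.shift x) = Mx x - Hc x 1.
Proof.
move=> Hx; apply: (is_sup_unique (Mx_sup (shiftX Hx))).
apply: (is_sup_ext (h1 := fun n => Hc x (n + 1) - Hc x 1)).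
  by move=> n; rewrite Hc_shift.
exact: is_sup_shift (Mx_sup Hx).
Qed.

Lemma mx_shift x : X x -> mx (Defs.shift x) = mx x - Hc x 1.
Proof.
move=> Hx.
have E : - mx (Defs.shift x) = - mx x - (- Hc x 1).
  apply: (is_sup_unique (mx_sup (shiftX Hx))).
  apply: (is_sup_ext (h1 := fun n => - Hc x (n + 1) - (- Hc x 1))).
    by move=> n; rewrite Hc_shift; ring.
  exact: (is_sup_shift (h := fun n => - Hc x n)) (mx_sup Hx).
lra.
Qed.

Lemma Mx_lsc x e : X x -> 0 < e -> exists N, forall y, X y -> agree N x y -> Mx x - e < Mx y.
Proof.
move=> Hx He; have [_ Ap] := Mx_sup Hx; have [n Hn] := Ap e He.
exists (Z.to_nat (Z.abs n + Z.of_nat m)) => y Hy Hag.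
have [U _] := Mx_sup Hy.
have := U n; rewrite -(@Hc_local x y _ n Hag); last lia.
lra.
Qed.

Lemma mx_usc x e : X x -> 0 < e -> exists N, forall y, X y -> agree N x y -> mx y < mx x + e.
Proof.
move=> Hx He; have [_ Ap] := mx_sup Hx; have [n Hn] := Ap e He.
exists (Z.to_nat (Z.abs n + Z.of_nat m)) => y Hy Hag.
have [U _] := mx_sup Hy.
have := U n; rewrite -(@Hc_local x y _ n Hag); last lia.
lra.
Qed.

Definition Dx x := Mx x - mx x.

Lemma Dx_lsc x e : X x -> 0 < e -> exists N, forall y, X y -> agree N x y -> Dx x - e < Dx y.
Proof.
move=> Hx He.
have [N1 H1] := Mx_lsc Hx (e := e / 2) ltac:(lra).
have [N2 H2] := mx_usc Hx (e := e / 2) ltac:(lra).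
exists (maxn N1 N2) => y Hy Hag.
have := H1 y Hy (agree_mono (leq_maxl N1 N2) Hag).
have := H2 y Hy (agree_mono (leq_maxr N1 N2) Hag).
rewrite /Dx; lra.
Qed.

Lemma Dx_le x1 x : X x1 -> X x -> Dx x <= Dx x1.
Proof.
move=> Hx1 Hx.
case: HXm => [[Hcl Hinv] [_ Hmin]].
pose Y z := X z /\ Dx z <= Dx x1.
have HY : forall z, X z -> Y z.
  apply: Hmin; first by move=> y [].
  - split.
      move=> z Happ.
      have Xz : X z by apply: Hcl => N; have [y [[Xy _] Hag]] := Happ N; exists y.
      split=> //; apply: Rnot_lt_le => Hlt.
      have [N HN] := Dx_lsc Xz (e := Dx z - Dx x1) ltac:(lra).
      have [y [[Xy Hy] Hag]] := Happ N.
      have := HN y Xy Hag; lra.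
    move=> z; split.
      move=> [Xz Hz]; split; first exact: (proj1 (Hinv z) Xz).
      by rewrite /Dx Mx_shift // mx_shift //; rewrite /Dx in Hz; lra.
    move=> [Xz Hz]; have Xz' : X z by exact: (proj2 (Hinv z) Xz).
    split=> //; move: Hz; rewrite /Dx Mx_shift // mx_shift //; lra.
  - by exists x1; split=> //; lra.
by case: (HY x Hx).
Qed.

Lemma Mx_cont x e : X x -> 0 < e -> exists N, forall y, X y -> agree N x y ->
  Rabs (Mx y - Mx x) < e.
Proof.
move=> Hx He.
have [N1 H1] := Mx_lsc Hx He.
have [N2 H2] := mx_usc Hx He.
exists (maxn N1 N2) => y Hy Hag.
have := H1 y Hy (agree_mono (leq_maxl N1 N2) Hag).
have := H2 y Hy (agree_mono (leq_maxr N1 N2) Hag).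
have := Dx_le Hx Hy; have := Dx_le Hy Hx; rewrite /Dx => D1 D2 h1 h2.
apply: Rabs_def1; lra.
Qed.

Lemma eigen : additive_eigenvalue X mu.
Proof.
exists (fun x => e2ipi (Mx x)); split; last split.
- move=> x Hx eps Heps.
  have P : 0 < 2 * PI by have := PI_RGT_0; lra.
  have [N HN] := Mx_cont Hx (e := eps / (2 * PI)) ltac:(apply: Rdiv_lt_0_compat; lra).
  exists N => y Hy Hag.
  apply: Rle_lt_trans (e2ipi_lip _ _) _.
  have := HN y Hy Hag => Hlt.
  have -> : eps = 2 * PI * (eps / (2 * PI)) by field; lra.
  by apply: Rmult_lt_compat_l.
- case: HXm => _ [[x1 Hx1] _]; exists x1; split=> //; exact: e2ipi_neq0.
- move=> x Hx; rewrite Mx_shift // Hc_1 -e2ipi_plus.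
  rewrite /indw; case: eqP => _ /=.
    rewrite -[RHS]e2ipi_m1; congr e2ipi; ring.
  congr e2ipi; ring.
Qed.

End Eigen.

Lemma INR_subS (N k : nat) : (k <= N)%N -> INR (N - k)%N.+1 = (INR N - INR k + 1).
Proof.
move=> H; rewrite !INR_IZR_INZ.
have -> : Z.of_nat (N - k).+1 = (Z.of_nat N - Z.of_nat k + 1)%Z by lia.
by rewrite plus_IZR minus_IZR.
Qed.

Theorem theorem1p1 (A : finType) (X : config A -> Prop)
  (HX : minimal_subshift X) (HD : dendric X) :
  (balanced_on_letters X <-> balanced_on_factors X) /\
  (balanced_on_letters X ->
     forall v : seq A, inL X v ->
       exists mu : R, is_frequency X v mu /\ additive_eigenvalue X mu /\
                      bounded_remainder X v mu).
Proof.
have [x0 Hx0] : exists x, X x by case: HX => _ [].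
have Hall : balanced_on_letters X -> forall v, Bal X (size v) (indw v).
  move=> HL v; case: (size v) => [|k]; first exact: Bal_const.
  exact: (Bal_all HD HL (x0 0%Z)).
split.
  split.
    by move=> HL v _; apply: Bal_balanced; apply: Hall.
  move=> HF a; case: (classic (inL X [:: a])) => Ha; first exact: HF.
  apply: Bal_balanced; apply: (Bal_ext (G1 := fun _ => 0%Z)); last exact: Bal_zero.
  move=> u Hu _; rewrite /indw; case: eqP => // E.
  by rewrite E in Hu.
move=> HL v Hv.
have [mu [K [K0 HK]]] := Bal_mu (Hall HL v) Hx0.
exists mu; split; last split.
- move=> eps Heps.
  pose K2 := (K + INR (size v + 1) * Rabs mu).
  have K2p : (0 <= K2).
    have := pos_INR (size v + 1); have := Rabs_pos mu; rewrite /K2; nra.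
  pose u := up (K2 / eps).
  exists (maxn (size v).+1 (Z.to_nat u)) => w [x [Hx [i Hi]]] HN.
  rewrite geq_max in HN; case/andP: HN => HN1 HN2.
  rewrite -Hi size_factor.
  set N := size w in HN1 HN2 *.
  have Hv' : (size v <= N)%N by apply: ltnW.
  have Np : (0 < INR N) by apply: lt_0_INR; lia.
  have Eo : INR (occ (factor x i N) v) = IZR (SB (size v) (indw v) x i (N - size v).+1).
    by rewrite INR_IZR_INZ occ_SB.
  have H1 := HK x i (N - size v).+1 Hx.
  rewrite -Eo INR_subS // in H1.
  have Hu : (K2 / eps < INR N).
    have [Hup _] := archimed (K2 / eps); rewrite -/u in Hup.
    case: (Z.le_gt_cases 0 u) => Hu0.
      have : (IZR u <= INR N).
        rewrite -(Z2Nat.id u) // -INR_IZR_INZ; apply: le_INR; apply/leP; exact: HN2.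
      lra.
    have : (IZR u < 0) by apply: IZR_lt.
    lra.
  have HK2 : (K2 < eps * INR N).
    have := Rmult_lt_compat_l eps _ _ Heps Hu.
    by have -> : (eps * (K2 / eps) = K2) by field; lra.
  have Hdiff : (Rabs (INR (occ (factor x i N) v) - INR N * mu) <= K2).
    have Hm : (Rabs ((1 - INR (size v)) * mu) <= INR (size v + 1) * Rabs mu).
      rewrite Rabs_mult plus_INR /=; apply: Rmult_le_compat_r; first exact: Rabs_pos.
      have Hp := pos_INR (size v); apply: Rabs_le; lra.
    have := Rabs_triang (INR (occ (factor x i N) v) - (INR N - INR (size v) + 1) * mu)
                         ((1 - INR (size v)) * mu).
    have -> : (INR (occ (factor x i N) v) - (INR N - INR (size v) + 1) * mu +
               (1 - INR (size v)) * mu = INR (occ (factor x i N) v) - INR N * mu) by ring.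
    rewrite /K2; lra.
  have -> : (INR (occ (factor x i N) v) / INR N - mu =
             (INR (occ (factor x i N) v) - INR N * mu) / INR N) by field; lra.
  rewrite Rabs_div; last lra.
  rewrite (Rabs_right (INR N)); last lra.
  apply: (Rmult_lt_reg_r (INR N)) => //.
  have -> : (Rabs (INR (occ (factor x i N) v) - INR N * mu) / INR N * INR N =
             Rabs (INR (occ (factor x i N) v) - INR N * mu)) by field; lra.
  lra.
- exact: (eigen HX HK).
- exists K => x Hx n.
  have Ec : Z.of_nat (count (fun i => factor x (Z.of_nat i) (size v) == v) (iota 0 n)) =
            SB (size v) (indw v) x 0 n.
    by apply: count_SB => k _.
  by rewrite INR_IZR_INZ Ec; apply: HK.
Qed.
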